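(* Let $G$ be an interval graph with a fixed interval representation, and let $P_1,\ldots,P_\ell$ be a solution of an instance of \textsc{Requirement Induced Disjoint Paths} on $G$ with terminal pairs $(s_1,t_1),\ldots,(s_k,t_k)$. For each $P_a$ that has at least one inner vertex, let $I_{P_a}$ be the union of the intervals of the inner vertices of $P_a$, and say $I_{P_a}$ has color $i$ if $P_a$ joins the vertices representing $s_i$ and $t_i$. Then: (i) for every $i$, every $I_{P_a}$ of color $i$ intersects the intervals of the vertices representing $s_i$ and $t_i$, and intersects no interval of any other terminal vertex; (ii) for distinct $a,b$ (with $P_a,P_b$ having inner vertices), $I_{P_a}\cap I_{P_b}=\emptyset$; (iii) for colors $i\neq j$, there is no interval $I_{P_c}$ of color $j$ that lies between two intervals $I_{P_a},I_{P_b}$ of color $i$.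
   Context: All graphs are finite, undirected, without loops or multiple edges. For a path $P=v_1\cdots v_r$, the vertices $v_1,v_r$ are its ends and $v_2,\ldots,v_{r-1}$ its inner vertices. An edge $v_iv_j$ with $i+1<j$ is an inner chord of $P$ if $v_i$ or $v_j$ is an inner vertex of $P$. Distinct paths $P_1,\ldots,P_\ell$ are mutually induced if (i) no $P_i$ has an inner chord; (ii) two distinct paths $P_i,P_j$ share only vertices that are ends of both paths; (iii) no inner vertex $u$ of some $P_i$ is adjacent to a vertex $v$ of some $P_j$ with $j\neq i$, unless $v$ is an end of both $P_i$ and $P_j$. \textsc{Requirement Induced Disjoint Paths}: the input is a graph $G$, $k$ terminal pairs $(s_1,t_1),\ldots,(s_k,t_k)$ and positive integers $r_1,\ldots,r_k$. Each terminal is placed on (''represented by'') a vertex of $G$ (a terminal vertex); several terminals may be represented by the same vertex, but $s_i$ and $t_i$ are represented by distinct vertices, and the unordered pairs of representing vertices are pairwise distinct for different $i$. A solution is a family of $\ell=r_1+\cdots+r_k$ mutually induced paths such that, for each $i$, exactly $r_i$ of them join the vertex representing $s_i$ and the vertex representing $t_i$. An interval representation assigns each vertex $u$ an interval $[l_u,r_u]$ of the real line, all endpoints being distinct integers, such that two vertices are adjacent iff their intervals intersect. For intervals (or unions of intervals that are intervals) $X,Y,Z$, $Z$ lies between $X$ and $Y$ if the right end-point of $X$ is smaller than the left end-point of $Z$ and the right end-point of $Z$ is smaller than the left end-point of $Y$. *)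

(* Defs.v *)
From HB Require Import structures.
From mathcomp Require Import all_boot all_order all_algebra.
Set Implicit Arguments. Unset Strict Implicit. Unset Printing Implicit Defensive.
Import Order.TTheory GRing.Theory Num.Theory.
Local Open Scope ring_scope.

Section Defs.
Variable V : finType.

Definition simple_graph (e : rel V) : Prop :=
  irreflexive e /\ symmetric e.

Definition interval_rep (e : rel V) (l r : V -> int) : Prop :=
  [/\ forall u, l u < r u,
      forall u v, l u = l v -> u = v,
      forall u v, r u = r v -> u = v,
      forall u v, l u <> r v &
      forall u v, u != v -> e u v = (l u <= r v) && (l v <= r u)].

Definition gpath (e : rel V) (p : seq V) : bool :=
  if p is x :: q then path e x q && uniq p else false.

Definition is_end (p : seq V) (v : V) : bool :=
  if p is x :: q then (v == x) || (v == last x q) else false.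

Definition inner (p : seq V) : seq V :=
  if p is x :: q then behead (belast x q) else [::].

Definition joins (p : seq V) (x y : V) : bool :=
  if p is a :: q then ((a == x) && (last a q == y)) || ((a == y) && (last a q == x))
  else false.

Definition no_inner_chord (e : rel V) (p : seq V) : Prop :=
  forall (d : V) (i j : nat), (i.+1 < j)%N -> (j < size p)%N ->
    e (nth d p i) (nth d p j) -> i = 0%N /\ j = (size p).-1.

Definition mutually_induced (e : rel V) (n : nat) (P : 'I_n -> seq V) : Prop :=
  [/\ forall a, no_inner_chord e (P a),
      forall a b, a != b -> forall v, v \in P a -> v \in P b ->
        is_end (P a) v && is_end (P b) v &
      forall a b, a != b -> forall u v, u \in inner (P a) -> v \in P b ->
        e u v -> is_end (P a) v && is_end (P b) v].

Definition ridp_instance (k : nat) (s t : 'I_k -> V) (req : 'I_k -> nat) : Prop :=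
  [/\ forall i, s i != t i,
      forall i j, i != j ->
        ~~ (((s i == s j) && (t i == t j)) || ((s i == t j) && (t i == s j))) &
      forall i, (0 < req i)%N].

Definition ridp_solution (e : rel V) (k : nat) (s t : 'I_k -> V) (req : 'I_k -> nat)
    (P : 'I_(\sum_(i < k) req i)%N -> seq V) : Prop :=
  [/\ forall a, gpath e (P a),
      forall a b, a != b -> P a <> P b /\ P a <> rev (P b),
      mutually_induced e P &
      forall i, #|[set a | joins (P a) (s i) (t i)]| = req i].

Definition terminal_vertex (k : nat) (s t : 'I_k -> V) (v : V) : Prop :=
  exists j, v = s j \/ v = t j.

Definition meets_vertex (l r : V -> int) (p : seq V) (v : V) : Prop :=
  exists2 u, u \in inner p & (l u <= r v) && (l v <= r u).

Definition meets_union (l r : V -> int) (p q : seq V) : Prop :=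
  exists u, exists w, [/\ u \in inner p, w \in inner q & (l u <= r w) && (l w <= r u)].

(* I_z lies between I_x and I_y: right end of I_x < left end of I_z and
   right end of I_z < left end of I_y (right end = max of r over inner
   vertices, left end = min of l over inner vertices; unfolded). *)
Definition lies_between (l r : V -> int) (x z y : seq V) : Prop :=
  (forall u w, u \in inner x -> w \in inner z -> r u < l w) /\
  (forall w v, w \in inner z -> v \in inner y -> r w < l v).

End Defs.

Arguments ridp_solution {V} e {k} s t req P.

(* Main.v *)
Require Import Defs.
From HB Require Import structures.
From mathcomp Require Import all_boot all_order all_algebra.
From mathcomp Require Import zify.
Set Implicit Arguments. Unset Strict Implicit.
Import Order.TTheory GRing.Theory Num.Theory.
Local Open Scope ring_scope.

Lemma innerE (V : finType) (a z : V) q : inner (a :: rcons q z) = q.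
Proof. by rewrite /= belast_rcons. Qed.

Lemma decomp (V : finType) (p : seq V) : inner p != [::] ->
  exists a q z, p = a :: rcons q z /\ q != [::].
Proof.
case: p => [|a q] //=. case/lastP: q => [|q1 z] //=.
rewrite belast_rcons /= => h. by exists a, q1, z.
Qed.

Lemma inner_notend (V : finType) (e : rel V) p u :
  gpath e p -> u \in inner p -> ~~ is_end p u.
Proof.
move=> g ui. have : inner p != [::] by case: (inner p) ui.
case/decomp => a [q [z [Ep _]]]. subst p.
move: g ui; rewrite innerE /gpath /is_end last_rcons => /andP [_].
rewrite /= mem_rcons in_cons negb_or rcons_uniq => /andP [/andP [az aq] /andP [zq _]] uq.
apply/negP; case/orP => /eqP Eu; subst u.
- by rewrite uq in aq.
- by rewrite uq in zq.
Qed.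

Lemma inner_mem (V : finType) (p : seq V) u : u \in inner p -> u \in p.
Proof.
move=> ui. have : inner p != [::] by case: (inner p) ui.
case/decomp => a [q [z [Ep _]]]. subst p.
move: ui; rewrite innerE => uq.
by rewrite in_cons mem_rcons in_cons uq !orbT.
Qed.

Lemma end_mem (V : finType) (p : seq V) v : is_end p v -> v \in p.
Proof.
case: p => [|a q] //= /orP [/eqP ->|/eqP ->]; first by rewrite mem_head.
exact: mem_last.
Qed.

Lemma joins_isend (V : finType) (p : seq V) x y : joins p x y -> is_end p x && is_end p y.
Proof.
case: p => [|a q] //= /orP [/andP [/eqP <- /eqP <-]|/andP [/eqP <- /eqP <-]];
  by rewrite !eqxx ?orbT.
Qed.

Lemma joins_end (V : finType) (p : seq V) x y v : joins p x y -> is_end p v -> v = x \/ v = y.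
Proof.
case: p => [|a q] //= /orP [/andP [/eqP <- /eqP <-]|/andP [/eqP <- /eqP <-]];
  by case/orP => /eqP ->; auto.
Qed.

Lemma joins_same (V : finType) (p : seq V) x y x' y' : joins p x y -> joins p x' y' ->
  ((x == x') && (y == y')) || ((x == y') && (y == x')).
Proof.
case: p => [|a q] //=.
move=> /orP[/andP[/eqP<- /eqP<-]|/andP[/eqP<- /eqP<-]]
       /orP[/andP[/eqP<- /eqP<-]|/andP[/eqP<- /eqP<-]]; by rewrite !eqxx ?orbT.
Qed.

Lemma joinsC (V : finType) (p : seq V) x y : joins p x y = joins p y x.
Proof. by case: p => [|a q] //=; rewrite orbC. Qed.

Lemma first_inner (V : finType) (e : rel V) p x y : symmetric e ->
  gpath e p -> joins p x y -> inner p != [::] -> exists2 u, u \in inner p & e x u.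
Proof.
move=> sym g j ni. case: (decomp ni) => a [q [z [Ep qn]]]. subst p.
case: q qn g j ni => [|b q] // _.
rewrite innerE /gpath /joins => /andP [].
rewrite rcons_path /= => /andP [/andP [eab _] elz] _.
rewrite last_rcons => + _.
case/orP => /andP [/eqP Ea /eqP Ez].
- by exists b; [rewrite mem_head | rewrite -Ea].
- exists (last b q); first exact: mem_last. by rewrite -Ez sym.
Qed.

Unset Implicit Arguments.

Theorem lemma1 (V : finType) (e : rel V) (l r : V -> int)
    (k : nat) (s t : 'I_k -> V) (req : 'I_k -> nat)
    (P : 'I_(\sum_(i < k) req i)%N -> seq V) :
  simple_graph e -> interval_rep e l r ->
  ridp_instance s t req -> ridp_solution e s t req P ->
  [/\ (forall (i : 'I_k) a, joins (P a) (s i) (t i) -> inner (P a) != [::] ->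
         [/\ meets_vertex l r (P a) (s i), meets_vertex l r (P a) (t i) &
             forall v, terminal_vertex s t v -> v != s i -> v != t i ->
               ~ meets_vertex l r (P a) v]),
      (forall a b, a != b -> inner (P a) != [::] -> inner (P b) != [::] ->
         ~ meets_union l r (P a) (P b)) &
      (forall (i j : 'I_k), i != j -> forall a b c,
         joins (P a) (s i) (t i) -> joins (P b) (s i) (t i) ->
         joins (P c) (s j) (t j) ->
         inner (P a) != [::] -> inner (P b) != [::] -> inner (P c) != [::] ->
         ~ lies_between l r (P a) (P c) (P b))].
Proof.
move=> [irr sym] [lt _ _ _ rep] [inst1 inst2 inst3] [gp pneq [mi1 mi2 mi3] card].
have meet_of_e : forall p x u, u \in inner p -> e x u -> meets_vertex l r p x.
  move=> p x u ui exu; exists u => //.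
  have xu : x != u by apply: contraTneq exu => ->; rewrite irr.
  by rewrite (rep _ _ xu) andbC in exu.
have ends : forall (i : 'I_k) a, joins (P a) (s i) (t i) -> inner (P a) != [::] ->
    meets_vertex l r (P a) (s i) /\ meets_vertex l r (P a) (t i).
  move=> i a ja ina; split.
  - by case: (first_inner sym (gp a) ja ina) => u ui /(meet_of_e _ _ _ ui).
  - rewrite joinsC in ja.
    by case: (first_inner sym (gp a) ja ina) => u ui /(meet_of_e _ _ _ ui).
have notmeet : forall a b v, a != b -> v \in P b -> ~~ is_end (P a) v ->
    ~ meets_vertex l r (P a) v.
  move=> a b v ab vb nend [u ui hm]. case: (eqVneq u v) => [uv|uv].
  - subst u. have := mi2 a b ab v (inner_mem ui) vb. by rewrite (negbTE nend).
  - have := mi3 a b ab u v ui vb. by rewrite (rep _ _ uv) hm (negbTE nend) => /(_ isT).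
have partI : forall (i : 'I_k) a, joins (P a) (s i) (t i) -> inner (P a) != [::] ->
         [/\ meets_vertex l r (P a) (s i), meets_vertex l r (P a) (t i) &
             forall v, terminal_vertex s t v -> v != s i -> v != t i ->
               ~ meets_vertex l r (P a) v].
  move=> i a ja ina. have [h1 h2] := ends i a ja ina. split=> // v [j vj] vs vt.
  have ij : i != j.
    apply/eqP => eij; subst j; case: vj => vj.
    - by rewrite vj eqxx in vs.
    - by rewrite vj eqxx in vt.
  have [b jb] : exists b, joins (P b) (s j) (t j).
    have : (0 < #|[set a | joins (P a) (s j) (t j)]|)%N by rewrite card; apply: inst3.
    by case/card_gt0P => b; rewrite inE => hb; exists b.
  have ab : a != b.
    apply/eqP => eab; subst b. have := inst2 i j ij. by rewrite (joins_same ja jb).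
  apply: (notmeet a b v ab).
  - have /andP [/end_mem h3 /end_mem h4] := joins_isend jb.
    by case: vj => ->.
  - by apply/negP => /(joins_end ja) [] Ev; [rewrite Ev eqxx in vs | rewrite Ev eqxx in vt].
split => //.
- move=> a b ab ina inb [u [w [ui wi hm]]]. case: (eqVneq u w) => [Euw|uw].
  + subst w. have := mi2 a b ab u (inner_mem ui) (inner_mem wi).
    by rewrite (negbTE (inner_notend (gp a) ui)).
  + have := mi3 a b ab u w ui (inner_mem wi).
    by rewrite (rep _ _ uw) hm (negbTE (inner_notend (gp b) wi)) andbF => /(_ isT).
- move=> i j ij a b c ja jb jc ina inb inc [h1 h2].
  have [x [xi xnot]] : exists x, (x = s i \/ x = t i) /\ (x != s j) && (x != t j).
    have := inst2 i j ij. have := inst1 i.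
    case: (boolP ((s i != s j) && (s i != t j))) => [h|]; first by exists (s i); auto.
    case: (boolP ((t i != s j) && (t i != t j))) => [h|]; first by exists (t i); auto.
    rewrite !negb_and !negbK => /orP [] /eqP e1 /orP [] /eqP e2;
      rewrite e1 e2 ?eqxx //= ?orbT //.
  have [w wi] : exists w, w \in inner (P c).
    by case: (inner (P c)) inc => // w q _; exists w; rewrite mem_head.
  have [[ua uai hua] [ub ubi hub]] : meets_vertex l r (P a) x /\ meets_vertex l r (P b) x.
    have [ha1 ha2] := ends i a ja ina. have [hb1 hb2] := ends i b jb inb.
    by case: xi => ->.
  case: (partI j c jc inc) => _ _ H.
  case/andP: xnot => xs xt.
  apply: (H x _ xs xt); first by exists i.
  exists w => //.
  have := h1 ua w uai wi; have := h2 w ub wi ubi; have := lt w.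
  move: hua hub => /andP [A1 A2] /andP [B1 B2] L1 L2 L3.
  apply/andP; split.
  - exact: le_trans (ltW (lt_trans L1 L2)) B1.
  - exact: le_trans A2 (ltW (lt_trans L3 L1)).
Qed.
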